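(* Let $F=(F_0,F_1,F_2)$ be a gapset filtration of genus $g\ge2$ and depth at most $3$ (padded with empty sets). Let $\alpha_1,\alpha_2$ be the maps on gapset filtrations $E=(E_0,E_1,E_2)$ of depth at most $3$ and multiplicity $k$ given by $\alpha_1(E)=(E_0\sqcup\{k\},E_1,E_2)$ and $\alpha_2(E)=(E_0\sqcup\{k\},E_1\sqcup\{k\},E_2)$. Then \begin{itemize} \item $F=\alpha_1(E)$ for some gapset filtration $E$ of depth at most $3$ if and only if $\max F_0>\max F_1$; \item $F=\alpha_2(E)$ for some gapset filtration $E$ of depth at most $3$ if and only if $\max F_0=\max F_1>\max F_2$. \end{itemize}
   Context: A gapset is a finite set $G \subset \mathbb{N}_+$ such that for all $z \in G$, whenever $z=x+y$ with $x,y\in\mathbb{N}_+$, we have $x\in G$ or $y\in G$. Its multiplicity is the least $m\ge1$ with $m\notin G$, its genus is $|G|$, and its depth is $\lceil c/m\rceil$ where $c=\max G+1$ ($c=0$ if $G=\emptyset$). For $m\ge1$, an $m$-filtration is a sequence $(F_0,\dots,F_t)$ with $F_0=[1,m-1]\supseteq F_1\supseteq\dots\supseteq F_t$; it is a gapset filtration if $\bigcup_i(im+F_i)$ is a gapset, and its multiplicity, genus (equal to $\sum_i|F_i|$) and depth are those of that gapset. Convention: $\max\emptyset=0$. *)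

(* Defs.v *)
From HB Require Import structures.
From mathcomp Require Import all_boot all_order.
From mathcomp Require Import finmap.
Set Implicit Arguments. Unset Strict Implicit. Unset Printing Implicit Defensive.
Local Open Scope fset_scope.

Definition is_gapset (G : {fset nat}) : Prop :=
  (0 \notin G) /\
  forall z x y : nat, z \in G -> z = (x + y)%N -> 0 < x -> 0 < y ->
    (x \in G) \/ (y \in G).

(* Convention: max ∅ = 0. *)
Definition fmax (A : {fset nat}) : nat := \max_(x <- A) x.

Lemma multiplicity_ex (G : {fset nat}) : exists n, (0 < n) && (n \notin G).
Proof.
exists (fmax G).+1; apply/andP; split => //.
apply/negP => h.
have := @leq_bigmax_seq nat (G : seq nat) xpredT (fun x => x) _ h isT.
by rewrite /fmax ltnn.
Qed.

Definition multiplicity (G : {fset nat}) : nat := ex_minn (multiplicity_ex G).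

Definition genus (G : {fset nat}) : nat := #|` G |.

Definition fint (a b : nat) : {fset nat} := [fset x | x in iota a (b.+1 - a)%N].

(* A filtration of depth at most 3, padded with empty sets: (F_0, F_1, F_2). *)
Definition filt3 := ({fset nat} * {fset nat} * {fset nat})%type.
Definition F0 (F : filt3) := F.1.1.
Definition F1 (F : filt3) := F.1.2.
Definition F2 (F : filt3) := F.2.

Definition is_m_filtration3 (m : nat) (F : filt3) : Prop :=
  0 < m /\ F0 F = fint 1 (m - 1)%N /\ F1 F `<=` F0 F /\ F2 F `<=` F1 F.

Definition gapset_of (m : nat) (F : filt3) : {fset nat} :=
  F0 F `|` [fset (m + x)%N | x in F1 F] `|` [fset (2 * m + x)%N | x in F2 F].

Definition is_gapset_filtration3 (m : nat) (F : filt3) : Prop :=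
  is_m_filtration3 m F /\ is_gapset (gapset_of m F).

Definition filt_multiplicity (m : nat) (F : filt3) := multiplicity (gapset_of m F).
Definition filt_genus (m : nat) (F : filt3) := genus (gapset_of m F).
Definition depth (G : {fset nat}) : nat :=
  let c := if G == fset0 then 0 else (fmax G).+1 in
  let m := multiplicity G in ((c + m.-1) %/ m)%N.
Definition filt_depth (m : nat) (F : filt3) := depth (gapset_of m F).

Definition alpha1 (k : nat) (E : filt3) : filt3 :=
  (F0 E `|` [fset k], F1 E, F2 E).
Definition alpha2 (k : nat) (E : filt3) : filt3 :=
  (F0 E `|` [fset k], F1 E `|` [fset k], F2 E).

(* Main.v *)
Require Import Defs.
From mathcomp Require Import all_boot all_order.
From mathcomp Require Import finmap.
From mathcomp Require Import zify.
Set Implicit Arguments. Unset Strict Implicit.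
Local Open Scope fset_scope.
Lemma fint_mem a b x : (x \in fint a b) = (a <= x <= b).
Proof. rewrite /fint inE /= mem_iota. apply/idP/idP; lia. Qed.

Lemma fmax_le (A : {fset nat}) n : (forall x, x \in A -> x <= n) -> fmax A <= n.
Proof. move=> h; apply/bigmax_leqP_seq => i hi _; exact: h. Qed.

Lemma le_fmax (A : {fset nat}) x : x \in A -> x <= fmax A.
Proof. move=> h; exact: (leq_bigmax_seq (r := A : seq nat) (F := id) x h isT). Qed.

Lemma gapset_ofP k (E : filt3) x :
  x \in gapset_of k E <-> [\/ x \in F0 E, exists2 b, b \in F1 E & x = (k + b)%N
                           | exists2 c, c \in F2 E & x = (2 * k + c)%N].
Proof.
rewrite /gapset_of !inE; split.
- case/orP => [/orP[h|/imfsetP[b hb ->]]|/imfsetP[c hc ->]].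
  + by constructor 1.
  + by constructor 2; exists b.
  + by constructor 3; exists c.
- case=> [h|[b hb ->]|[c hc ->]].
  + by rewrite h.
  + by apply/orP; left; apply/orP; right; apply/imfsetP; exists b.
  + by apply/orP; right; apply/imfsetP; exists c.
Qed.

Lemma filt_mem k E x : is_m_filtration3 k E ->
  x \in gapset_of k E ->
  [\/ 1 <= x <= k - 1, exists2 b, b \in F1 E & (x = k + b)%N /\ 1 <= b <= k-1
  | exists2 c, c \in F2 E & (x = 2 * k + c)%N /\ 1 <= c <= k-1].
Proof.
case=> k0 [e0 [s1 s2]] /gapset_ofP [h|[b hb ->]|[c hc ->]].
- by constructor 1; rewrite -fint_mem -e0.
- constructor 2; exists b => //; split => //; rewrite -fint_mem -e0; exact: (fsubsetP s1).
- constructor 3; exists c => //; split => //; rewrite -fint_mem -e0;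
  apply: (fsubsetP s1); exact: (fsubsetP s2).
Qed.

Lemma mult_filt k E : is_m_filtration3 k E -> multiplicity (gapset_of k E) = k.
Proof.
move=> hf; have [k0 [e0 _]] := hf.
rewrite /multiplicity; case: ex_minnP => n /andP[n0 nG] hmin.
apply/eqP; rewrite eqn_leq; apply/andP; split.
- apply: hmin; rewrite k0 /=; apply/negP => /(@filt_mem _ _ _ hf) [] ; try lia.
  + by case=> b _ ?; lia.
  + by case=> b _ ?; lia.
- rewrite leqNgt; apply/negP => nk; move/negP: nG; apply.
  by apply/gapset_ofP; constructor 1; rewrite e0 fint_mem; lia.
Qed.

Lemma depth_filt k E : is_m_filtration3 k E -> filt_depth k E <= 3.
Proof.
move=> hf; have [k0 _] := hf.
rewrite /filt_depth /depth mult_filt //.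
have hm : fmax (gapset_of k E) <= 3 * k - 1.
  apply: fmax_le => x /(@filt_mem _ _ _ hf) [] ; try lia.
  + by case=> b _ ?; lia.
  + by case=> b _ ?; lia.
rewrite -ltnS ltn_divLR //.
case: ifP => _; lia.
Qed.

Lemma key m B C B' : 1 < m -> is_gapset_filtration3 m (fint 1 (m-1), B, C) ->
  B' `<=` B -> C `<=` B' -> (forall b, b \in B -> b < m-1 -> b \in B') ->
  (forall b, b \in B' -> b < m-1) ->
  is_gapset_filtration3 (m-1) (fint 1 (m-1-1), B', C).
Proof.
move=> m1 [[_ [_ [sB sC]]] [_ gF]] sB' sC' hB hB'.
have hf : is_m_filtration3 (m-1) (fint 1 (m-1-1), B', C).
  split; first lia. split => //. split => //.
  apply/fsubsetP => b hb; rewrite fint_mem.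
  have := hB' _ hb; have := fsubsetP sB b (fsubsetP sB' b hb).
  rewrite /F0 /= fint_mem; lia.
split => //; split.
  by apply/negP => /(@filt_mem _ _ _ hf) [] ; [lia | case=> ? _ ?; lia | case=> ? _ ?; lia].
move=> z x y hz zxy x0 y0.
have Hx : x < m - 1 -> x \in gapset_of (m-1) (fint 1 (m-1-1), B', C).
  by move=> ?; apply/gapset_ofP; constructor 1; rewrite /F0 /= fint_mem; lia.
have Hy : y < m - 1 -> y \in gapset_of (m-1) (fint 1 (m-1-1), B', C).
  by move=> ?; apply/gapset_ofP; constructor 1; rewrite /F0 /= fint_mem; lia.
case: (ltnP x (m-1)) => [/Hx|xm]; first by left.
case: (ltnP y (m-1)) => [/Hy|ym]; first by right.
case/(@filt_mem _ _ _ hf): hz => [?|[b _ ?]|[a ha [za a1]]]; try lia.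
have haB : a \in B' := fsubsetP sC' a ha.
have := hB' a haB => am.
have := gF (2 * m + a)%N (m + (x - (m-1)))%N (m + (y - (m-1)))%N.
case.
- by apply/gapset_ofP; constructor 3; exists a.
- lia.
- lia.
- lia.
- move/gapset_ofP => [] ; rewrite /F0 /F1 /F2 /=.
  + rewrite fint_mem; lia.
  + case=> b hb e; left; apply/gapset_ofP; constructor 2; exists b.
      by apply: hB => //; lia.
    lia.
  + case=> c hc e; have := fsubsetP sB c (fsubsetP sC c hc); rewrite /F0 /= fint_mem; lia.
- move/gapset_ofP => [] ; rewrite /F0 /F1 /F2 /=.
  + rewrite fint_mem; lia.
  + case=> b hb e; right; apply/gapset_ofP; constructor 2; exists b.
      by apply: hB => //; lia.
    lia.
  + case=> c hc e; have := fsubsetP sB c (fsubsetP sC c hc); rewrite /F0 /= fint_mem; lia.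
Qed.

Lemma fmax_fint1 m : 1 < m -> fmax (fint 1 (m-1)) = m - 1.
Proof.
move=> m1; apply/eqP; rewrite eqn_leq; apply/andP; split.
  by apply: fmax_le => x; rewrite fint_mem; lia.
by apply: le_fmax; rewrite fint_mem; lia.
Qed.

Lemma fmax_filt k E : is_m_filtration3 k E ->
  fmax (F0 E `|` [fset k]) = k /\ fmax (F1 E) <= k - 1 /\ fmax (F2 E) <= k - 1
  /\ fmax (F1 E `|` [fset k]) = k.
Proof.
move=> [k0 [e0 [s1 s2]]].
have b1 : forall x, x \in F1 E -> 1 <= x <= k - 1.
  by move=> x hx; rewrite -fint_mem -e0; exact: (fsubsetP s1).
have eq1 : forall X : {fset nat}, (forall x, x \in X -> x <= k - 1) -> fmax (X `|` [fset k]) = k.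
  move=> X hX; apply/eqP; rewrite eqn_leq; apply/andP; split.
    by apply: fmax_le => x; rewrite !inE => /orP[/hX|/eqP->]; lia.
  by apply: le_fmax; rewrite !inE eqxx orbT.
split; first by apply: eq1 => x; rewrite e0 fint_mem; lia.
split; first by apply: fmax_le => x /b1; lia.
split; first by apply: fmax_le => x /(fsubsetP s2) /b1; lia.
by apply: eq1 => x /b1; lia.
Qed.

Theorem mainTheorem13 (m : nat) (F : filt3) :
  is_gapset_filtration3 m F ->
  filt_depth m F <= 3 ->
  2 <= filt_genus m F ->
  ((exists (k : nat) (E : filt3),
      is_gapset_filtration3 k E /\ filt_depth k E <= 3 /\
      F = alpha1 (filt_multiplicity k E) E)
   <-> fmax (F1 F) < fmax (F0 F))
  /\
  ((exists (k : nat) (E : filt3),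
      is_gapset_filtration3 k E /\ filt_depth k E <= 3 /\
      F = alpha2 (filt_multiplicity k E) E)
   <-> fmax (F0 F) = fmax (F1 F) /\ fmax (F2 F) < fmax (F1 F)).
Proof.
move=> hF _ _.
case: F hF => [[A B] C] hF.
have [[m0 [eA [sB sC]]] _] := hF.
rewrite /F0 /F1 /F2 /= in eA sB sC *.
have hF' : is_gapset_filtration3 m (fint 1 (m-1), B, C) by rewrite -eA.
have Bb : forall b, b \in B -> 1 <= b <= m - 1.
  by move=> b hb; rewrite -fint_mem -eA; exact: (fsubsetP sB).
have fB : fmax B <= m - 1 by apply: fmax_le => b /Bb; lia.
have Am : 1 < m -> m - 1 \in A by move=> ?; rewrite eA fint_mem; lia.
have A0 : m <= 1 -> fmax A = 0.
  by move=> ?; apply/eqP; rewrite -leqn0; apply: fmax_le => x; rewrite eA fint_mem; lia.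
split; split.
- case=> k [E [[hE _] [_ ]]]; rewrite /filt_multiplicity mult_filt // /alpha1.
  move=> [-> -> _]; have [h1 [h2 _]] := fmax_filt hE.
  have [k0 _] := hE. rewrite h1; lia.
- move=> h.
  have m1 : 1 < m by case: (ltnP 1 m) => // /A0; lia.
  have fA := fmax_fint1 m1; rewrite -eA in fA.
  have hk := key m1 hF' (fsubset_refl B) sC (fun b hb _ => hb)
    (fun b hb => leq_ltn_trans (le_fmax hb) (leq_trans h (eq_leq fA))).
  exists (m-1), (fint 1 (m-1-1), B, C); split => //; split; first exact: depth_filt hk.1.
  rewrite /filt_multiplicity mult_filt; last exact: hk.1.
  rewrite /alpha1 /F0 /F1 /F2 /=; congr (_, _, _).
  apply/fsetP => x; rewrite eA in_fsetU in_fset1 !fint_mem; apply/idP/idP; lia.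
- case=> k [E [[hE _] [_ ]]]; rewrite /filt_multiplicity mult_filt // /alpha2.
  move=> [-> -> ->]; have [h1 [_ [h3 h4]]] := fmax_filt hE.
  have [k0 _] := hE. rewrite /F0 /F1 /F2 /= in h1 h3 h4 *; rewrite h1 h4; lia.
- move=> [e1 e2].
  have m1 : 1 < m by case: (ltnP 1 m) => // /A0; lia.
  have fA := fmax_fint1 m1; rewrite -eA in fA.
  have Bm : m - 1 \in B.
    apply/negPn/negP => nB.
    have : fmax B <= m - 2.
      apply: fmax_le => b hb; have := Bb b hb.
      have : b != m - 1 by apply: contraNneq nB => <-.
      lia.
    lia.
  have sC' : C `<=` B `\` [fset m - 1].
    apply/fsubsetP => c hc; rewrite !inE (fsubsetP sC c hc) andbT.
    have := le_fmax hc; lia.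
  have hk := key m1 hF' (fsubsetDl B [fset m - 1]) sC'
    (fun b hb hlt => ltac:(rewrite !inE hb andbT; lia))
    (fun b hb => ltac:(move: hb; rewrite !inE => /andP[hb1 /Bb]; lia)).
  exists (m-1), (fint 1 (m-1-1), B `\` [fset m - 1], C); split => //; split; first exact: depth_filt hk.1.
  rewrite /filt_multiplicity mult_filt; last exact: hk.1.
  rewrite /alpha2 /F0 /F1 /F2 /=; congr (_, _, _).
    by apply/fsetP => x; rewrite eA in_fsetU in_fset1 !fint_mem; apply/idP/idP; lia.
  apply/fsetP => x; rewrite !inE; case: eqP => [->|] /=; [exact: Bm | by rewrite ?orbF ?andbT].
Qed.
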